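(* Let $K\ge 1$ and let an instance of ring grooming be $K$-quasi-uniform, and let $d=\max_{j\ne k} d_{jk}$. Then the minimum number of ADMs satisfies $$m\ \ge\ \frac{(n^2-1)\sqrt{d/(2cK)}}{4}.$$
   Context: Ring grooming. An instance consists of integers $n\ge 2$ (ring size) and $c\ge 1$ (capacity), and a finite list $L$ of unordered pairs $\{j,k\}$ with $j\ne k$, $j,k\in\{1,\dots,n\}$ (repetitions allowed); these are the traffic demands. Let $d_{jk}=d_{kj}$ be the number of times $\{j,k\}$ occurs in $L$ (the traffic matrix; $d_{jj}=0$). Let $C_n$ be the cycle graph on vertices $1,\dots,n$ in cyclic order, with edges $\{l,l+1\}$ for $1\le l<n$ and $\{n,1\}$. A solution uses some finite number $r$ of ''rings'', each a copy of $C_n$ in which every edge has capacity $c$. A routing specifies, for every ring $i$ and every pair $j<k$, nonnegative integers $t^0_{ijk},t^1_{ijk}$: the amounts of $\{j,k\}$-traffic sent on ring $i$ along each of the two arcs of $C_n$ between $j$ and $k$. It is feasible if $\sum_i (t^0_{ijk}+t^1_{ijk})=d_{jk}$ for all $j<k$, and for every ring $i$ and every edge $e$ of $C_n$ the total traffic routed on ring $i$ along arcs containing $e$ is at most $c$. Ring $i$ needs an ADM (add/drop multiplexer) at vertex $j$ iff some traffic with endpoint $j$ is routed on ring $i$. The cost of a routing is the total number of ADMs, i.e. the number of pairs (ring $i$, vertex $j$) at which an ADM is needed. $m=m(n,c,L)$ denotes the minimum cost over all feasible routings. The instance is called $K$-quasi-uniform if $d_{jk}\ge 1$ for all $j\ne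 k$ and $d_{jk}/d_{j'k'}\le K$ for all $j\ne k$, $j'\ne k'$. *)

(* Defs.v *)
(* Ring grooming. Vertices of C_n are labelled 0..n-1
   (type 'I_n) instead of 1..n; edge l : 'I_n is the edge {l, l+1 mod n}. *)
From mathcomp Require Import all_boot all_order all_algebra.
Set Implicit Arguments. Unset Strict Implicit. Unset Printing Implicit Defensive.
Import Order.TTheory GRing.Theory Num.Theory.

Definition valid_demands (n : nat) (L : seq ('I_n * 'I_n)) : bool :=
  all (fun p => p.1 != p.2) L.

Definition dmat (n : nat) (L : seq ('I_n * 'I_n)) (j k : 'I_n) : nat :=
  count (fun p => (p == (j, k)) || (p == (k, j))) L.

Definition dmax (n : nat) (L : seq ('I_n * 'I_n)) : nat :=
  \max_(j : 'I_n) \max_(k : 'I_n | j != k) dmat L j k.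

(* For j < k, arc 0 between j and k is j, j+1, ..., k, i.e. it uses the edges
   l with j <= l < k; arc 1 is the complementary arc (all other edges). *)
Definition on_arc0 (n : nat) (j k l : 'I_n) : bool := (j <= l) && (l < k).

(* A routing on r rings: t0 i j k, t1 i j k (only used for j < k). *)
Definition load (n r : nat) (t0 t1 : 'I_r -> 'I_n -> 'I_n -> nat)
  (i : 'I_r) (l : 'I_n) : nat :=
  \sum_(j : 'I_n) \sum_(k : 'I_n | j < k)
     (if on_arc0 j k l then t0 i j k else t1 i j k).

Definition feasible (n c : nat) (L : seq ('I_n * 'I_n)) (r : nat)
  (t0 t1 : 'I_r -> 'I_n -> 'I_n -> nat) : Prop :=
  (forall j k : 'I_n, j < k -> \sum_(i < r) (t0 i j k + t1 i j k) = dmat L j k)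
  /\ (forall (i : 'I_r) (l : 'I_n), load t0 t1 i l <= c).

Definition needs_adm (n r : nat) (t0 t1 : 'I_r -> 'I_n -> 'I_n -> nat)
  (i : 'I_r) (j : 'I_n) : bool :=
  [exists k : 'I_n, ((j < k) && (0 < t0 i j k + t1 i j k))
                 || ((k < j) && (0 < t0 i k j + t1 i k j))].

Definition cost (n r : nat) (t0 t1 : 'I_r -> 'I_n -> 'I_n -> nat) : nat :=
  \sum_(i < r) #|[set j : 'I_n | needs_adm t0 t1 i j]|.

Definition quasi_uniform (R : numFieldType) (n : nat) (L : seq ('I_n * 'I_n))
  (K : R) : Prop :=
  (forall j k : 'I_n, j != k -> 1 <= dmat L j k)
  /\ (forall j k j' k' : 'I_n, j != k -> j' != k' ->
        ((dmat L j k)%:R / (dmat L j' k')%:R <= K)%R).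

(* Main.v *)
Require Import Defs.
From mathcomp Require Import all_boot all_order all_algebra.
Import Order.TTheory GRing.Theory Num.Theory.
Set Implicit Arguments. Unset Strict Implicit. Unset Printing Implicit Defensive.

Definition admset n r (t0 t1 : 'I_r -> 'I_n -> 'I_n -> nat) (i : 'I_r) : {set 'I_n} :=
  [set j | needs_adm t0 t1 i j].
Definition G0 n r (t0 t1 : 'I_r -> 'I_n -> 'I_n -> nat) i (j k : 'I_n) :=
  #|[set u | (u \in admset t0 t1 i) && on_arc0 j k u]|.
Definition G1 n r (t0 t1 : 'I_r -> 'I_n -> 'I_n -> nat) i (j k : 'I_n) :=
  #|[set u | (u \in admset t0 t1 i) && ~~ on_arc0 j k u]|.
Definition gg n r (t0 t1 : 'I_r -> 'I_n -> 'I_n -> nat) i (j k : 'I_n) :=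
  minn (G0 t0 t1 i j k) (G1 t0 t1 i j k).

Lemma cap_ring n c r (t0 t1 : 'I_r -> 'I_n -> 'I_n -> nat) i :
  (forall l, load t0 t1 i l <= c) ->
  \sum_(j : 'I_n) \sum_(k : 'I_n | j < k) (t0 i j k + t1 i j k) * gg t0 t1 i j k
    <= #|admset t0 t1 i| * c.
Proof.
move=> Hc.
apply: (@leq_trans (\sum_(u in admset t0 t1 i) load t0 t1 i u)); last first.
  by rewrite -sum_nat_const; apply: leq_sum => u _; apply: Hc.
rewrite /load exchange_big /=; apply: leq_sum => j _.
rewrite exchange_big /=; apply: leq_sum => k _.
rewrite (bigID (on_arc0 j k)) /=.
rewrite (eq_bigr (fun _ => t0 i j k)); last by move=> u /andP[_ ->].
rewrite [\sum_(i0 in _ | ~~ _) _](eq_bigr (fun _ => t1 i j k)); last by move=> u /andP[_ /negbTE ->].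
rewrite !sum_nat_cond_const -/(G0 t0 t1 i j k) -/(G1 t0 t1 i j k) /gg mulnDl.
by rewrite leq_add // mulnC leq_mul2r ?geq_minl ?geq_minr orbT.
Qed.

Lemma count_inj (n h : nat) (S : {set 'I_n}) (f : 'I_n -> nat) :
  {in S &, injective f} -> (forall k, k \in S -> 0 < f k < h) -> #|S| <= h.-1.
Proof.
move=> inj rng; rewrite cardE -(size_map f).
have -> : h.-1 = size (iota 1 h.-1) by rewrite size_iota.
apply: uniq_leq_size.
  by rewrite map_inj_in_uniq ?enum_uniq // => x y; rewrite !mem_enum; exact: inj.
move=> x /mapP[y]; rewrite mem_enum => /rng /andP[h1 h2] ->.
by rewrite mem_iota h1 /= add1n prednK // (leq_ltn_trans _ h2).
Qed.

Lemma G0_mono n r (t0 t1 : 'I_r -> 'I_n -> 'I_n -> nat) i (j k k' : 'I_n) :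
  j <= k -> k \in admset t0 t1 i -> k < k' -> G0 t0 t1 i j k < G0 t0 t1 i j k'.
Proof.
move=> jk kA kk'; apply: proper_card; apply/properP; split.
  apply/subsetP => u; rewrite !inE /on_arc0 => /andP[-> /andP[-> uk]] /=.
  exact: ltn_trans uk kk'.
by move: kA; rewrite inE => kA; exists k; rewrite !inE /on_arc0 ?kA ?jk ?kk' ?ltnn ?andbF.
Qed.

Lemma G1_mono n r (t0 t1 : 'I_r -> 'I_n -> 'I_n -> nat) i (j k k' : 'I_n) :
  j <= k -> k \in admset t0 t1 i -> k < k' -> G1 t0 t1 i j k' < G1 t0 t1 i j k.
Proof.
move=> jk kA kk'; apply: proper_card; apply/properP; split.
  apply/subsetP => u; rewrite !inE /on_arc0 => /andP[-> H] /=.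
  apply: contra H => /andP[-> uk] /=; exact: ltn_trans uk kk'.
by move: kA; rewrite inE => kA; exists k; rewrite !inE /on_arc0 ?kA ?jk ?kk' ?ltnn ?andbF.
Qed.

Lemma adm_of_pos n r (t0 t1 : 'I_r -> 'I_n -> 'I_n -> nat) i (j k : 'I_n) :
  j < k -> 0 < t0 i j k + t1 i j k ->
  (j \in admset t0 t1 i) && (k \in admset t0 t1 i).
Proof.
move=> jk pos; rewrite !inE; apply/andP; split; apply/existsP.
  by exists k; rewrite jk pos.
by exists j; rewrite jk pos orbT.
Qed.

Lemma G0_pos n r (t0 t1 : 'I_r -> 'I_n -> 'I_n -> nat) i (j k : 'I_n) :
  j \in admset t0 t1 i -> j < k -> 0 < G0 t0 t1 i j k.
Proof.
move=> jA jk; rewrite /G0 card_gt0; apply/set0Pn; exists j.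
by rewrite inE jA /on_arc0 leqnn jk.
Qed.

Lemma G1_pos n r (t0 t1 : 'I_r -> 'I_n -> 'I_n -> nat) i (j k : 'I_n) :
  k \in admset t0 t1 i -> 0 < G1 t0 t1 i j k.
Proof.
move=> kA; rewrite /G1 card_gt0; apply/set0Pn; exists k.
by rewrite inE kA /on_arc0 ltnn andbF.
Qed.

Lemma sum_b2n_card n (P Q : pred 'I_n) :
  \sum_(k | P k) (Q k : nat) = #|[set k | P k && Q k]|.
Proof.
rewrite -[RHS]muln1 -sum_nat_cond_const big_mkcondr /=.
by apply: eq_bigr => k _; case: (Q k).
Qed.

Lemma ring_bad n r (t0 t1 : 'I_r -> 'I_n -> 'I_n -> nat) i h :
  \sum_(j : 'I_n) \sum_(k : 'I_n | j < k)
     ((j \in admset t0 t1 i) && (k \in admset t0 t1 i) && (gg t0 t1 i j k < h) : nat)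
  <= #|admset t0 t1 i| * (2 * h.-1).
Proof.
set A := admset t0 t1 i.
rewrite (bigID (mem A)) /= [X in _ + X]big1 ?addn0; last first.
  by move=> j /negbTE jA; apply: big1 => k _; rewrite jA.
rewrite -sum_nat_const; apply: leq_sum => j jA.
apply: (@leq_trans (\sum_(k : 'I_n | j < k) (((k \in A) && (G0 t0 t1 i j k < h) : nat)
                     + ((k \in A) && (G1 t0 t1 i j k < h) : nat)))).
  apply: leq_sum => k _; rewrite jA /= /gg gtn_min.
  by case: (k \in A); case: (G0 _ _ _ _ _ < h); case: (G1 _ _ _ _ _ < h).
rewrite big_split /= !sum_b2n_card mul2n -addnn; apply: leq_add.
  apply: (count_inj (f := fun k => G0 t0 t1 i j k)).
    move=> x y; rewrite !inE => /and3P[jx xA _] /and3P[jy yA _] E.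
    have {}xA : x \in A by rewrite inE. have {}yA : y \in A by rewrite inE.
    case: (ltngtP x y) => [xy|yx|/val_inj//]; [have := G0_mono (ltnW jx) xA xy|
      have := G0_mono (ltnW jy) yA yx]; by rewrite E ltnn.
  by move=> k; rewrite !inE => /and3P[jk kA ->]; rewrite G0_pos.
apply: (count_inj (f := fun k => G1 t0 t1 i j k)).
  move=> x y; rewrite !inE => /and3P[jx xA _] /and3P[jy yA _] E.
  have {}xA : x \in A by rewrite inE. have {}yA : y \in A by rewrite inE.
  case: (ltngtP x y) => [xy|yx|/val_inj//]; [have := G1_mono (ltnW jx) xA xy|
    have := G1_mono (ltnW jy) yA yx]; by rewrite E ltnn.
by move=> k; rewrite !inE => /and3P[jk kA ->]; rewrite G1_pos ?inE.
Qed.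

Definition bad n r (t0 t1 : 'I_r -> 'I_n -> 'I_n -> nat) h (j k : 'I_n) :=
  [exists i, (0 < t0 i j k + t1 i j k) && (gg t0 t1 i j k < h)].

Lemma cost_adm n r (t0 t1 : 'I_r -> 'I_n -> 'I_n -> nat) :
  cost t0 t1 = \sum_(i < r) #|admset t0 t1 i|.
Proof. by []. Qed.

Lemma main_nat n c r (L : seq ('I_n * 'I_n)) (t0 t1 : 'I_r -> 'I_n -> 'I_n -> nat) h :
  feasible c L t0 t1 ->
  \sum_(j : 'I_n) \sum_(k : 'I_n | j < k)
     (if bad t0 t1 h j k then 1 else h) * dmat L j k <= cost t0 t1 * c.
Proof.
case=> Hd Hc.
rewrite cost_adm big_distrl /=.
apply: (@leq_trans (\sum_(i < r) \sum_(j : 'I_n) \sum_(k : 'I_n | j < k)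
   (t0 i j k + t1 i j k) * gg t0 t1 i j k)); last first.
  by apply: leq_sum => i _; apply: cap_ring.
rewrite exchange_big /=; apply: leq_sum => j _.
rewrite exchange_big /=; apply: leq_sum => k jk.
rewrite -Hd // big_distrr /=; apply: leq_sum => i _.
case Ht: (t0 i j k + t1 i j k) => [|t]; first by rewrite muln0.
have pos : 0 < t0 i j k + t1 i j k by rewrite Ht.
have /andP[jA kA] := adm_of_pos jk pos.
have g1 : 0 < gg t0 t1 i j k by rewrite /gg leq_min G0_pos // G1_pos.
case Hb: (bad t0 t1 h j k).
  by rewrite mul1n leq_pmulr.
move/negbT: Hb => /existsPn/(_ i); rewrite negb_and pos /= -leqNgt => hg.
by rewrite mulnC leq_mul2l hg orbT.
Qed.

Lemma bad_count n r (t0 t1 : 'I_r -> 'I_n -> 'I_n -> nat) h :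
  \sum_(j : 'I_n) \sum_(k : 'I_n | j < k) (bad t0 t1 h j k : nat)
    <= cost t0 t1 * (2 * h.-1).
Proof.
rewrite cost_adm big_distrl /=.
apply: (@leq_trans (\sum_(i < r) \sum_(j : 'I_n) \sum_(k : 'I_n | j < k)
     ((j \in admset t0 t1 i) && (k \in admset t0 t1 i) && (gg t0 t1 i j k < h) : nat))); last first.
  by apply: leq_sum => i _; apply: ring_bad.
rewrite exchange_big /=; apply: leq_sum => j _.
rewrite exchange_big /=; apply: leq_sum => k jk.
case Hb: (bad t0 t1 h j k) => //=.
case/existsP: Hb => i /andP[pos hg].
have /andP[jA kA] := adm_of_pos jk pos.
by rewrite (bigD1 i) //= jA kA hg.
Qed.

Lemma card_sum n (A : {set 'I_n}) : #|A| = \sum_(j : 'I_n) (j \in A : nat).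
Proof. by rewrite -sum1_card big_mkcond /=; apply: eq_bigr => j _; case: (j \in A). Qed.

Lemma pairs_count n : (\sum_(j : 'I_n) \sum_(k : 'I_n | j < k) 1) * 2 = n * n.-1.
Proof.
have E1 : \sum_(j : 'I_n) \sum_(k : 'I_n | j < k) 1 = \sum_(j : 'I_n) \sum_(k : 'I_n) (j < k : nat).
  by apply: eq_bigr => j _; rewrite big_mkcond; apply: eq_bigr => k _; case: ltnP.
rewrite muln2 -addnn {1}E1 E1 [X in _ + X]exchange_big -big_split /=.
rewrite -[n in n * _]card_ord -sum_nat_const; apply: eq_bigr => j _.
rewrite -big_split /= (bigD1 j) //= ltnn add0n.
rewrite (eq_bigr (fun _ => 1)); last first.
  move=> k kj; case: (ltngtP j k) => //= kj'; by rewrite (val_inj kj') eqxx in kj.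
by rewrite sum_nat_cond_const muln1 cardsE cardC1 card_ord.
Qed.

Lemma cover n c r (L : seq ('I_n * 'I_n)) (t0 t1 : 'I_r -> 'I_n -> 'I_n -> nat) :
  2 <= n -> (forall j k : 'I_n, j != k -> 1 <= dmat L j k) ->
  feasible c L t0 t1 -> n <= cost t0 t1.
Proof.
move=> n2 Hd1 [Hd _].
have cov : forall j : 'I_n, exists i, j \in admset t0 t1 i.
  move=> j.
  have [k jk] : exists k : 'I_n, j != k.
    have h0 : 0 < n by apply: leq_trans n2.
    have h1 : 1 < n by [].
    case: (eqVneq j (Ordinal h0)) => [->|ne]; last by exists (Ordinal h0).
    by exists (Ordinal h1).
  have pairpos : forall a b : 'I_n, a < b -> a != b ->
      exists i, (a \in admset t0 t1 i) && (b \in admset t0 t1 i).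
    move=> a b ab neq.
    have H := Hd1 a b neq; rewrite -(Hd a b ab) in H.
    have : ~~ [forall i, t0 i a b + t1 i a b == 0].
      by apply: contraL H => /forallP hh; rewrite big1 // => i _; apply/eqP/hh.
    rewrite negb_forall => /existsP[i]; rewrite -lt0n => pos.
    by exists i; apply: adm_of_pos.
  case: (ltngtP j k) => [jk'|kj|E]; last by rewrite (val_inj E) eqxx in jk.
    by case: (pairpos j k jk' jk) => i /andP[? _]; exists i.
  by case: (pairpos k j kj); [rewrite eq_sym|move=> i /andP[_ ?]; exists i].
rewrite cost_adm.
under eq_bigr do rewrite card_sum.
rewrite exchange_big /= -[n in n <= _]card_ord -sum1_card.
apply: leq_sum => j _; case: (cov j) => i ji.
by rewrite (bigD1 i) //= ji.
Qed.

From mathcomp Require Import ring lra.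
Local Open Scope ring_scope.

Lemma key (R : rcfType) n c r (L : seq ('I_n * 'I_n)) (t0 t1 : 'I_r -> 'I_n -> 'I_n -> nat)
  (d0 : R) h :
  feasible c L t0 t1 -> (forall j k : 'I_n, (j < k)%N -> (d0 <= (dmat L j k)%:R)%R) ->
  (0 <= d0)%R -> (0 < h)%N ->
  (d0 * (h%:R * (n%:R * n.-1%:R) / 2 - 2 * (h%:R - 1) ^+ 2 * (cost t0 t1)%:R)
     <= c%:R * (cost t0 t1)%:R :> R)%R.
Proof.
move=> F Hd0 d0ge h0.
set m := cost t0 t1.
set W := (\sum_(j : 'I_n) \sum_(k : 'I_n | (j < k)%N) (if bad t0 t1 h j k then 1 else h))%N.
set B := (\sum_(j : 'I_n) \sum_(k : 'I_n | (j < k)%N) (bad t0 t1 h j k : nat))%N.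
set P := (\sum_(j : 'I_n) \sum_(k : 'I_n | (j < k)%N) 1)%N.
have hW : (W + h.-1 * B = h * P)%N.
  rewrite /W /B /P !big_distrr -big_split /=; apply: eq_bigr => j _.
  rewrite !big_distrr -big_split /=; apply: eq_bigr => k _.
  by case: (bad _ _ _ _ _) => /=; rewrite ?muln1 ?muln0 ?addn0 // add1n prednK.
have hB : (B <= m * (2 * h.-1))%N by apply: bad_count.
have hP : (P * 2 = n * n.-1)%N by apply: pairs_count.
have h1 : (d0 * W%:R <= c%:R * m%:R :> R)%R.
  apply: (@le_trans _ _ ((\sum_(j : 'I_n) \sum_(k : 'I_n | (j < k)%N)
     ((if bad t0 t1 h j k then 1 else h) * dmat L j k))%N%:R)); last first.
    by rewrite -natrM ler_nat mulnC; apply: main_nat.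
  rewrite /W !natr_sum mulr_sumr; apply ler_sum => j _.
  rewrite !natr_sum mulr_sumr; apply ler_sum => k jk.
  by rewrite natrM mulrC ler_wpM2l // Hd0.
have hm1 : (h.-1)%:R = h%:R - 1 :> R.
  by rewrite -[in RHS](prednK h0) -natr1 addrK.
have eW : (W%:R = h%:R * P%:R - (h%:R - 1) * B%:R :> R)%R.
  have := congr1 (fun x => x%:R : R) hW => /=.
  rewrite natrD !natrM hm1 => <-; ring.
have eP : (P%:R = n%:R * n.-1%:R / 2 :> R)%R.
  by rewrite -natrM -hP natrM mulfK // pnatr_eq0.
have eB : ((h%:R - 1) * B%:R <= (h%:R - 1) * (m%:R * (2 * (h%:R - 1))) :> R)%R.
  apply: ler_wpM2l; first by rewrite subr_ge0 ler1n.
  by have := hB; rewrite -(ler_nat R) natrM natrM hm1.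
apply: le_trans h1; rewrite eW.
rewrite (_ : h%:R * (n%:R * n.-1%:R) / 2 = h%:R * P%:R); last by rewrite eP; ring.
apply: ler_wpM2l => //.
rewrite lerD2l lerN2; apply: (le_trans eB); rewrite le_eqVlt; apply/orP; left.
by apply/eqP; ring.
Qed.

Lemma realC (R : realFieldType) (N s w : R) : 2 <= N -> 0 < s -> 0 <= w -> w <= 1/2 -> 1/2 < w + s ->
  4*N < s*(N^+2-1) -> 4*N*s < N+1 -> (N+1)*(1+4*w^+2) <= 4*N*(w+s).
Proof.
move=> N2 s0 w0 wh ws h1 h2.
set v := 1/2 - w.
have v0 : 0 <= v by rewrite /v; lra.
have vs : v < s by rewrite /v; lra.
have E : 4*N*(w+s) - (N+1)*(1+4*w^+2) = -2 + 4*v + 4*N*s - 4*(N+1)*v^+2.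
  by rewrite /v; field.
have i1 : s*(N-1)*(3*N+1) >= 2*N.
  have : s*(N-1)*(3*N+1) - s*(N^+2-1) = s*(N-1)*(2*N) by ring.
  have : 0 <= s*(N-1)*(2*N) by rewrite !mulr_ge0 //; lra.
  lra.
have i2 : 4*(N+1)*v^+2 <= 4*(N+1)*s^+2.
  apply: ler_wpM2l; first by lra.
  rewrite ler_sqr ?nnegrE; lra.
have i3 : N*(4*(N+1)*s^+2) <= (N+1)^+2 * s.
  have : (N+1)^+2 * s - N*(4*(N+1)*s^+2) = (N+1)*s*(N+1 - 4*N*s) by ring.
  have : 0 <= (N+1)*s*(N+1 - 4*N*s) by rewrite !mulr_ge0 //; lra.
  lra.
have : N * (-2 + 4*v + 4*N*s - 4*(N+1)*v^+2) >= 0.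
  have : N * (-2 + 4*v + 4*N*s - 4*(N+1)*v^+2) >=  N*(-2 + 4*N*s) - N*(4*(N+1)*s^+2).
    have : 0 <= N*(4*v) by rewrite mulr_ge0; lra.
    have : N*(4*(N+1)*v^+2) <= N*(4*(N+1)*s^+2) by apply: ler_wpM2l; lra.
    have : N * (-2 + 4*v + 4*N*s - 4*(N+1)*v^+2) = N*(-2+4*N*s) + N*(4*v) - N*(4*(N+1)*v^+2) by ring.
    lra.
  have : N*(-2 + 4*N*s) - (N+1)^+2*s = s*(N-1)*(3*N+1) - 2*N by ring.
  lra.
move=> H; rewrite -subr_ge0 E.
have N0 : 0 < N by lra.
by rewrite -(pmulr_rge0 _ N0).
Qed.

Lemma find_e (R : realFieldType) (s : R) (N : nat) : 0 <= s -> 1/2 < N%:R * s ->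
  exists e : nat, e%:R * s <= 1/2 /\ 1/2 < (e.+1)%:R * s.
Proof.
move=> s0; elim: N => [|N IH]; first by rewrite mul0r; lra.
move=> H; case: (lerP (N%:R * s) (1/2)) => h; first by exists N.
exact: IH.
Qed.

Local Close Scope ring_scope.

Theorem corollary1 (R : rcfType) (n c : nat) (L : seq ('I_n * 'I_n)) (K : R) :
  2 <= n -> 1 <= c -> valid_demands L -> (1 <= K)%R -> quasi_uniform L K ->
  forall (r : nat) (t0 t1 : 'I_r -> 'I_n -> 'I_n -> nat),
    feasible c L t0 t1 ->
    (((n%:R ^+ 2 - 1) * Num.sqrt ((dmax L)%:R / (2 * c%:R * K))) / 4
       <= (cost t0 t1)%:R :> R)%R.
Proof.
move=> n2 c1 _ K1 [Hd1 Hrat] r t0 t1 F.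
Local Open Scope ring_scope.
have K0 : 0 < K by apply: lt_le_trans K1; exact: ltr01.
have c0 : 0 < c%:R :> R by rewrite ltr0n.
set D := dmax L.
have hDK : forall j' k' : 'I_n, j' != k' -> D%:R <= K * (dmat L j' k')%:R.
  move=> j' k' ne'.
  have Kd : 0 <= K * (dmat L j' k')%:R by rewrite mulr_ge0 // ltW.
  have mx : forall x y : nat, x%:R <= K * (dmat L j' k')%:R -> y%:R <= K * (dmat L j' k')%:R ->
      (maxn x y)%:R <= K * (dmat L j' k')%:R.
    by move=> x y hx hy; case: (leqP x y).
  rewrite /D /dmax; apply: (big_ind (fun x : nat => x%:R <= K * (dmat L j' k')%:R)) => //.
  move=> j _; apply: (big_ind (fun x : nat => x%:R <= K * (dmat L j' k')%:R)) => //.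
  move=> k jk; have := Hrat j k j' k' jk ne'.
  have dpos : 0 < (dmat L j' k')%:R :> R by rewrite ltr0n; apply: Hd1.
  by rewrite ler_pdivrMr.
set d0 := D%:R / K.
have d0ge : 0 <= d0 by rewrite divr_ge0 // ltW.
have Hd0 : forall j k : 'I_n, (j < k)%N -> d0 <= (dmat L j k)%:R.
  move=> j k jk; rewrite ler_pdivrMr // mulrC; apply: hDK.
  by rewrite neq_ltn jk.
set s := Num.sqrt (D%:R / (2 * c%:R * K)).
have s0 : 0 <= s by apply: sqrtr_ge0.
have ss : s ^+ 2 = D%:R / (2 * c%:R * K).
  by rewrite sqr_sqrtr // divr_ge0 // mulr_ge0 // ?mulr_ge0 ?ltW.
have d0s : d0 = 2 * c%:R * s ^+ 2.
  rewrite ss /d0; field; apply/andP; split; apply/negP => /eqP h0.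
    by move: K0; rewrite h0 ltxx.
  by move: c0; rewrite h0 ltxx.
have cov := cover n2 Hd1 F.
set M := (cost t0 t1)%:R.
set N : R := n%:R.
have N2 : 2 <= N by rewrite /N (ler_nat R 2 n).
have hn1 : n.-1%:R = N - 1 :> R.
  by rewrite /N -[in RHS](prednK (leq_trans (isT : (0 < 2)%N) n2)) -natr1 addrK.
have keyh : forall h : nat, (0 < h)%N ->
    s ^+ 2 * (h%:R * (N * (N - 1)) - 4 * (h%:R - 1) ^+ 2 * M) <= M.
  move=> h h0; have := key F Hd0 d0ge h0; rewrite d0s hn1 -/N -/M => H.
  rewrite -(ler_pM2l c0); apply: le_trans H; rewrite le_eqVlt; apply/orP; left.
  by apply/eqP; field.
have MN : N <= M by rewrite /N /M ler_nat.
case: (lerP (s * (N ^+ 2 - 1)) (4 * N)) => hA.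
  apply: le_trans MN; rewrite ler_pdivrMr; last by lra.
  by rewrite [_ * s]mulrC [N * _]mulrC.
case: (lerP (N + 1) (4 * N * s)) => hB.
  have := keyh 1%N isT; rewrite subrr expr0n /= mulr0 mul0r subr0 mul1r => H.
  apply: le_trans H.
  have : 0 <= (N - 1) * s * (4 * N * s - (N + 1)) by rewrite !mulr_ge0 //; lra.
  move=> H0; rewrite -subr_ge0.
  have -> : s ^+ 2 * (N * (N - 1)) - (N ^+ 2 - 1) * s / 4 = (N - 1) * s * (4 * N * s - (N + 1)) / 4 by field.
  by rewrite divr_ge0.
have [e [he1 he2]] : exists e : nat, e%:R * s <= 1/2 /\ 1/2 < (e.+1)%:R * s.
  apply: (find_e (N := n)) => //.
  rewrite -/N; nra.
set w := e%:R * s.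
have w0 : 0 <= w by rewrite mulr_ge0.
have ws : 1/2 < w + s.
  by move: he2; rewrite -[(e.+1)%:R]natr1 mulrDl !mul1r.
have spos : 0 < s.
  rewrite lt_neqAle s0 andbT; apply/eqP => s00; move: hA; rewrite -s00 mul0r; lra.
have hC := realC N2 spos w0 he1 ws hA hB.
have H := keyh e.+1 isT.
rewrite -[(e.+1)%:R]natr1 addrK in H.
have H' : s * (w + s) * (N * (N - 1)) <= M * (1 + 4 * w ^+ 2).
  rewrite -subr_ge0.
  have -> : M * (1 + 4 * w ^+ 2) - s * (w + s) * (N * (N - 1))
     = M - s ^+ 2 * ((e%:R + 1) * (N * (N - 1)) - 4 * e%:R ^+ 2 * M) by rewrite /w; ring.
  by rewrite subr_ge0.
have Q0 : 0 < 1 + 4 * w ^+ 2 by rewrite ltr_pwDl // mulr_ge0 // sqr_ge0.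
rewrite -(ler_pM2r Q0); apply: le_trans H'.
have -> : (N ^+ 2 - 1) * s / 4 * (1 + 4 * w ^+ 2) = s * (N - 1) / 4 * ((N + 1) * (1 + 4 * w ^+ 2)) by field.
have -> : s * (w + s) * (N * (N - 1)) = s * (N - 1) / 4 * (4 * N * (w + s)) by field.
apply: ler_wpM2l => //; rewrite divr_ge0 // mulr_ge0 //; lra.
Qed.
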